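(* Let $0<V\le1$ and let $$P^{col}_{BB84}(ab|xy)=\frac{1+(-1)^{a\oplus b\oplus x\cdot y}\big[\delta_{x,y}V+\tfrac{1-V}{2}\big]+(-1)^{a\oplus b\oplus x\oplus y}\tfrac{1-V}{2}}{4},\qquad a,b,x,y\in\{0,1\}.$$ In the steering scenario described in the context, the steering cost of $P^{col}_{BB84}$ is $C_{steer}(P^{col}_{BB84})=V$.
   Context: Steering scenario: Alice performs two black-box dichotomic measurements $x\in\{0,1\}$ (outcomes $a\in\{0,1\}$) on her part of an unknown $d\times2$ quantum state $\rho_{AB}$; Bob performs projective qubit measurements in two mutually unbiased bases $\{|f_1\rangle,|f_2\rangle\}$, $\{|g_1\rangle,|g_2\rangle\}$ of $\mathbb{C}^2$ ($|\langle f_i|g_j\rangle|^2=1/2$), with $\Pi_{b|0}=|f_{b+1}\rangle\langle f_{b+1}|$, $\Pi_{b|1}=|g_{b+1}\rangle\langle g_{b+1}|$. Let $\mathcal{N}$ be the set of boxes $p(ab|xy)=\operatorname{Tr}[\Pi_{b|y}\sigma_{a|x}]$ with $\sigma_{a|x}=\operatorname{Tr}_A[(M_{a|x}\otimes\mathbb{1})\rho_{AB}]$ for some such state and POVMs $\{M_{a|x}\}$. A box is unsteerable if $p(ab|xy)=\sum_\lambda p(\lambda)p(a|x,\lambda)\operatorname{Tr}(\Pi_{b|y}\rho_\lambda)$ for some probability distribution $p(\lambda)$, conditional distributions $p(a|x,\lambda)$ and qubit density operators $\rho_\lambda$; otherwise steerable. The steering cost $C_{steer}(P)$ of $P\in\mathcal{N}$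 is the minimum of $p_S\in[0,1]$ over all decompositions $P=p_SP_S+(1-p_S)P_{US}$ with $P_S\in\mathcal{N}$ steerable and $P_{US}$ unsteerable. $\oplus$ is addition modulo 2. *)

(* Defs.v *)
From HB Require Import structures.
From mathcomp Require Import all_boot all_order all_algebra.
From mathcomp Require Import reals.
From mathcomp Require Import complex mxtens.

Set Implicit Arguments.
Unset Strict Implicit.
Unset Printing Implicit Defensive.

Import Order.TTheory GRing.Theory Num.Theory.
Local Open Scope ring_scope.
Local Open Scope complex_scope.

Section Steering.
Variable R : realType.
Local Notation C := R[i].

Definition adjmx m n (A : 'M[C]_(m, n)) : 'M[C]_(n, m) := (map_mx Num.conj A)^T.

(* positive semidefinite: <v|A|v> >= 0 for all v (this also forces A Hermitian) *)
Definition psd n (A : 'M[C]_n) : Prop :=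
  forall v : 'cV[C]_n, 0 <= (adjmx v *m A *m v) 0 0.

Definition density n (rho : 'M[C]_n) : Prop := psd rho /\ \tr rho = 1.

Definition povm2 d (M : bool -> bool -> 'M[C]_d) : Prop :=
  forall x, psd (M false x) /\ psd (M true x) /\ M false x + M true x = 1%:M.

Definition idx2 (b : bool) : 'I_2 := if b then ord_max else ord0.

Definition unitary2 (F : 'M[C]_2) : Prop := adjmx F *m F = 1%:M.

Definition MUB (F G : 'M[C]_2) : Prop :=
  unitary2 F /\ unitary2 G /\
  forall i j : 'I_2, `|(adjmx (col i F) *m col j G) 0 0| ^+ 2 = (1 / 2)%:C.

(* Bob's projectors: Pi_{b|0} = |f_{b+1}><f_{b+1}|, Pi_{b|1} = |g_{b+1}><g_{b+1}| *)
Definition bobPi (F G : 'M[C]_2) (b y : bool) : 'M[C]_2 :=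
  let v := col (idx2 b) (if y then G else F) in v *m adjmx v.

(* boxes p(ab|xy), arguments in the order a b x y *)
Definition box := bool -> bool -> bool -> bool -> R.

(* partial trace over Alice (first tensor factor, dimension d) *)
Definition ptraceA d (X : 'M[C]_(d * 2)) : 'M[C]_2 :=
  \matrix_(i, j) \sum_(k < d) X (mxtens_index (k, i)) (mxtens_index (k, j)).

Definition in_N (F G : 'M[C]_2) (P : box) : Prop :=
  exists (d : nat) (rho : 'M[C]_(d * 2)) (M : bool -> bool -> 'M[C]_d),
    density rho /\ povm2 M /\
    forall a b x y,
      (P a b x y)%:C =
      \tr (bobPi F G b y *m ptraceA (tensmx (M a x) (1%:M : 'M[C]_2) *m rho)).

(* unsteerable (LHS) boxes; hidden variable lambda ranging over a finite set *)
Definition unsteerable (F G : 'M[C]_2) (P : box) : Prop :=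
  exists (n : nat) (pl : 'I_n -> R) (q : 'I_n -> bool -> bool -> R)
         (rl : 'I_n -> 'M[C]_2),
    (forall l, 0 <= pl l) /\ \sum_(l < n) pl l = 1 /\
    (forall l x a, 0 <= q l x a) /\ (forall l x, q l x false + q l x true = 1) /\
    (forall l, density (rl l)) /\
    forall a b x y,
      (P a b x y)%:C =
      \sum_(l < n) (pl l * q l x a)%:C * \tr (bobPi F G b y *m rl l).

Definition steerable F G P : Prop := ~ unsteerable F G P.

Definition steer_decomp F G (P : box) (pS : R) : Prop :=
  0 <= pS <= 1 /\
  exists PS PUS : box,
    in_N F G PS /\ steerable F G PS /\ unsteerable F G PUS /\
    forall a b x y, P a b x y = pS * PS a b x y + (1 - pS) * PUS a b x y.

Definition steering_cost_eq F G (P : box) (c : R) : Prop :=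
  steer_decomp F G P c /\ forall pS, steer_decomp F G P pS -> c <= pS.

Definition sgnb (b : bool) : R := if b then -1 else 1.

Definition P_col_BB84 (V : R) : box := fun a b x y =>
  (1 + sgnb (a (+) b (+) (x && y)) * ((if x == y then V else 0) + (1 - V) / 2)
     + sgnb (a (+) b (+) x (+) y) * ((1 - V) / 2)) / 4.

End Steering.

(* Main.v *)
Require Import Defs.
From HB Require Import structures.
From mathcomp Require Import all_boot all_order all_algebra.
From mathcomp Require Import reals.
From mathcomp Require Import complex mxtens spectral sesquilinear.
From mathcomp Require Import ring lra.
Import Order.TTheory GRing.Theory Num.Theory.
Local Open Scope ring_scope.
Local Open Scope sesquilinear_scope.

Set Implicit Arguments.
Unset Strict Implicit.
Unset Printing Implicit Defensive.
Section Aux.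
Variable R : realType.
Local Notation C := R[i].

Definition qf n (A : 'M[C]_n) (u w : 'cV[C]_n) : C := (adjmx u *m A *m w) 0 0.
Definition inner n (u w : 'cV[C]_n) : C := (adjmx u *m w) 0 0.

Lemma adjmxE m n (A : 'M[C]_(m, n)) i j : adjmx A i j = (A j i)^*.
Proof. by rewrite !mxE. Qed.

Lemma adjmxK m n (A : 'M[C]_(m, n)) : adjmx (adjmx A) = A.
Proof. by apply/matrixP => i j; rewrite !adjmxE conjCK. Qed.

Lemma adjmxM m n p (A : 'M[C]_(m, n)) (B : 'M[C]_(n, p)) :
  adjmx (A *m B) = adjmx B *m adjmx A.
Proof.
apply/matrixP => i j; rewrite !mxE rmorph_sum; apply: eq_bigr => k _.
by rewrite !mxE rmorphM mulrC.
Qed.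

Lemma adjmxDZ m n (a b : C) (A B : 'M[C]_(m, n)) :
  adjmx (a *: A + b *: B) = a^* *: adjmx A + b^* *: adjmx B.
Proof. by apply/matrixP => i j; rewrite !mxE rmorphD !rmorphM. Qed.

Lemma adjmx_tstar n (A : 'M[C]_n) : adjmx A = A^t*.
Proof. by apply/matrixP => i j; rewrite !mxE. Qed.

Lemma qfDl n (A : 'M[C]_n) a b u w z :
  qf A (a *: u + b *: w) z = a^* * qf A u z + b^* * qf A w z.
Proof.
by rewrite /qf adjmxDZ !mulmxDl -!scalemxAl !mxE.
Qed.

Lemma qfDr n (A : 'M[C]_n) a b u w z :
  qf A z (a *: u + b *: w) = a * qf A z u + b * qf A z w.
Proof.
by rewrite /qf !mulmxDr -!scalemxAr !mxE.
Qed.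

Lemma ler0c' (x : R) : (0 <= (x%:C)%C :> C) = (0 <= x).
Proof. exact: ler0c. Qed.

Lemma ge0_from (r : R) (z : C) : (r%:C)%C = z -> 0 <= z -> 0 <= r.
Proof. by move=> <-; rewrite ler0c'. Qed.

Lemma qf_delta n (A : 'M[C]_n) i j :
  qf A (delta_mx i 0) (delta_mx j 0) = A i j.
Proof.
rewrite /qf; have -> : adjmx (delta_mx i 0 : 'cV[C]_n) = delta_mx 0 i.
  by apply/matrixP => k l; rewrite !mxE rmorph_nat andbC.
by rewrite -rowE -colE !mxE.
Qed.

Lemma conj_i : ('i%C : C)^* = - 'i%C.
Proof. by simpc. Qed.

Lemma herm_aux (aii ajj a b : C) : aii^* = aii -> ajj^* = ajj ->
  (aii + a + b + ajj)^* = aii + a + b + ajj ->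
  (aii + 'i%C * a - 'i%C * b + ajj)^* = aii + 'i%C * a - 'i%C * b + ajj ->
  b^* = a.
Proof.
move=> h1 h2.
rewrite !rmorphD ?rmorphN !rmorphM /= conj_i h1 h2 => E1 E2.
have hi2 : ('i%C : C) * 'i%C = -1 by rewrite -expr2 sqr_i.
have id : (aii + a^* + b^* + ajj) - (aii + a + b + ajj)
   - 'i%C * ((aii + - 'i%C * a^* - - 'i%C * b^* + ajj) - (aii + 'i%C * a - 'i%C * b + ajj))
   = (b^* - a) * (1 - 'i%C * 'i%C) + (a^* - b) * (1 + 'i%C * 'i%C) by ring.
rewrite E1 E2 !subrr mulr0 subr0 hi2 addrN mulr0 addr0 opprK in id.
apply/eqP; rewrite -subr_eq0; apply/eqP.
move/esym/eqP: id; rewrite mulf_eq0 => /orP[/eqP //|].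
by rewrite -[1 + 1]/(2%:R) pnatr_eq0.
Qed.

Lemma psd_herm n (A : 'M[C]_n) : psd A -> adjmx A = A.
Proof.
move=> hA; apply/matrixP => i j; rewrite adjmxE.
have hr : forall u, (qf A u u)^* = qf A u u.
  by move=> u; apply: geC0_conj; apply: hA.
have hi2 : ('i%C : C) * 'i%C = -1 by rewrite -expr2 sqr_i.
apply: (herm_aux (aii := A i i) (ajj := A j j)).
- by have := hr (delta_mx i 0); rewrite qf_delta.
- by have := hr (delta_mx j 0); rewrite qf_delta.
- have := hr (1 *: delta_mx i 0 + 1 *: delta_mx j 0).
  rewrite qfDl !qfDr !qf_delta rmorph1 !mul1r.
  by rewrite !addrA.
- have := hr (1 *: delta_mx i 0 + 'i%C *: delta_mx j 0).
  rewrite qfDl !qfDr !qf_delta rmorph1 !mul1r conj_i.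
  have -> : A i i + 'i%C * A i j + - 'i%C * (A j i + 'i%C * A j j)
     = A i i + 'i%C * A i j - 'i%C * A j i - ('i%C * 'i%C) * A j j by ring.
  by rewrite hi2 mulN1r opprK.
Qed.

Lemma conj_entry n (P X : 'M[C]_n) i :
  (P *m X *m P^t*) i i = qf X (adjmx (row i P)) (adjmx (row i P)).
Proof.
rewrite /qf adjmxK !mxE; apply: eq_bigr => k _; rewrite !mxE.
congr (_ * _); apply: eq_bigr => l _; by rewrite !mxE.
Qed.

Lemma tr_psd_mul n (A B : 'M[C]_n) : psd A -> psd B -> 0 <= \tr (A *m B).
Proof.
move=> hA hB.
have hn : A \is normalmx by apply/normalmxP; rewrite -adjmx_tstar psd_herm.
have /orthomx_spectralP eA := hn.
set P := spectralmx A in eA; set d := spectral_diag A in eA.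
have PU : P \is unitarymx := spectral_unitarymx A.
have PP : P *m P^t* = 1%:M by apply/unitarymxP.
rewrite invmx_unitary // in eA.
have hd : forall i, d 0 i = (P *m A *m P^t*) i i.
  move=> i; rewrite eA !mulmxA PP mul1mx -!mulmxA PP mulmx1.
  by rewrite mxE eqxx mulr1n.
have -> : \tr (A *m B) = \tr (diag_mx d *m (P *m B *m P^t*)).
  by rewrite eA -!mulmxA mxtrace_mulC -!mulmxA.
rewrite mul_diag_mx /mxtrace; apply: sumr_ge0 => i _; rewrite mxE.
by apply: mulr_ge0; [rewrite hd conj_entry | rewrite conj_entry]; apply: hA || apply: hB.
Qed.

Lemma trPi n (v : 'cV[C]_n) (X : 'M[C]_n) :
  \tr (v *m adjmx v *m X) = qf X v v.
Proof. by rewrite -mulmxA mxtrace_mulC trace_mx11 /qf. Qed.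

Lemma sum_tens d (h : 'I_(d * 2) -> C) :
  \sum_p h p = \sum_(k < d) \sum_(i < 2) h (mxtens_index (k, i)).
Proof.
rewrite pair_big /= (reindex (@mxtens_index d 2)) /=.
  by apply: eq_bigr => -[k i] _.
by exists (@mxtens_unindex d 2) => p _; [apply: mxtens_indexK | apply: mxtens_unindexK].
Qed.

Lemma sum_delta n (f : 'I_n -> C) i : \sum_j f j * (1%:M : 'M[C]_n) i j = f i.
Proof.
rewrite (bigD1 i) //= big1 ?addr0 => [|j nj]; rewrite mxE ?eqxx ?mulr1 //.
by rewrite eq_sym (negbTE nj) mulr0.
Qed.

Lemma ptr_entry d (M : 'M[C]_d) (rho : 'M[C]_(d * 2)) i j :
  ptraceA (tensmx M (1%:M : 'M[C]_2) *m rho) i j =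
  \sum_k \sum_k' M k k' * rho (mxtens_index (k', i)) (mxtens_index (k, j)).
Proof.
rewrite mxE; apply: eq_bigr => k _; rewrite mxE sum_tens; apply: eq_bigr => k' _.
rewrite -(sum_delta (fun i' => M k k' * rho (mxtens_index (k', i')) (mxtens_index (k, j))) i).
by apply: eq_bigr => i' _; rewrite tensmxE mulrAC.
Qed.

Lemma sum4 d (F : 'I_2 -> 'I_2 -> 'I_d -> 'I_d -> C) :
  \sum_(j < 2) \sum_(i < 2) \sum_(k < d) \sum_(k' < d) F j i k k' =
  \sum_(k < d) \sum_(k' < d) \sum_(i < 2) \sum_(j < 2) F j i k k'.
Proof.
rewrite exchange_big /=.
under eq_bigr => i _ do rewrite exchange_big /=.
under eq_bigr => i _ do under eq_bigr => k _ do rewrite exchange_big /=.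
rewrite exchange_big /=.
by under eq_bigr => k _ do rewrite exchange_big /=.
Qed.

Lemma ptr_formula d (M : 'M[C]_d) (rho : 'M[C]_(d * 2)) (v : 'cV[C]_2) :
  \tr (v *m adjmx v *m ptraceA (tensmx M (1%:M : 'M[C]_2) *m rho)) =
  \tr (M *m \matrix_(k', k) \sum_(i < 2) \sum_(j < 2)
       ((v i 0)^* * rho (mxtens_index (k', i)) (mxtens_index (k, j)) * v j 0)).
Proof.
transitivity (\sum_k \sum_k' \sum_(i < 2) \sum_(j < 2)
   (v i 0)^* * (M k k' * rho (mxtens_index (k', i)) (mxtens_index (k, j))) * v j 0); last first.
  rewrite /mxtrace; apply: eq_bigr => k _; rewrite mxE; apply: eq_bigr => k' _.
  rewrite mxE mulr_sumr; apply: eq_bigr => i _; rewrite mulr_sumr; apply: eq_bigr => j _.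
  by ring.
rewrite trPi /qf !mxE.
under eq_bigr => j _ do rewrite !mxE big_distrl /=.
under eq_bigr => j _ do under eq_bigr => i _ do rewrite adjmxE ptr_entry big_distrr big_distrl /=.
under eq_bigr => j _ do under eq_bigr => i _ do under eq_bigr => k _ do rewrite big_distrr big_distrl /=.
rewrite sum4; apply: eq_bigr => k _; apply: eq_bigr => k' _; apply: eq_bigr => i _; apply: eq_bigr => j _.
by rewrite mulrA.
Qed.


Lemma unidx1 d (k : 'I_d) (j : 'I_2) :
  Ordinal (mxtens_index_proof1 (mxtens_index (k, j))) = k.
Proof. exact: (congr1 fst (mxtens_indexK (k, j))). Qed.
Lemma unidx2 d (k : 'I_d) (j : 'I_2) :
  Ordinal (mxtens_index_proof2 (mxtens_index (k, j))) = j.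
Proof. exact: (congr1 snd (mxtens_indexK (k, j))). Qed.

Lemma Rv_psd d (rho : 'M[C]_(d * 2)) (v : 'cV[C]_2) : psd rho ->
  psd (\matrix_(k', k) \sum_(i < 2) \sum_(j < 2)
       ((v i 0)^* * rho (mxtens_index (k', i)) (mxtens_index (k, j)) * v j 0)).
Proof.
move=> hr w.
have := hr (\col_p (w (mxtens_unindex p).1 0 * v (mxtens_unindex p).2 0)).
rewrite -/(qf _ _ _) -/(qf _ _ _) /qf !mxE.
rewrite sum_tens.
under eq_bigr => k _ do under eq_bigr => j _ do rewrite !mxE sum_tens big_distrl /=.
under eq_bigr => k _ do under eq_bigr => j _ do under eq_bigr => k' _ do rewrite big_distrl /=.
under [X in _ -> _ <= X]eq_bigr => k _ do rewrite !mxE big_distrl /=.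
under [X in _ -> _ <= X]eq_bigr => k _ do under eq_bigr => k' _ do rewrite !mxE big_distrr big_distrl /=.
under [X in _ -> _ <= X]eq_bigr => k _ do under eq_bigr => k' _ do under eq_bigr => i _ do rewrite big_distrr big_distrl /=.
under [X in 0 <= X -> _]eq_bigr => k _ do rewrite exchange_big /=.
under [X in 0 <= X -> _]eq_bigr => k _ do under eq_bigr => k' _ do rewrite exchange_big /=.
move=> h; apply: le_trans h _; rewrite le_eqVlt; apply/orP; left; apply/eqP.
apply: eq_bigr => k _; apply: eq_bigr => k' _; apply: eq_bigr => i _; apply: eq_bigr => j _.
rewrite adjmxE !mxE !unidx1 !unidx2 rmorphM /=.
by ring.
Qed.

Lemma inN_ge0 (F G : 'M[C]_2) P : in_N F G P -> forall a b x y, 0 <= P a b x y.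
Proof.
move=> [d [rho [M [[hrho _] [hM hP]]]]] a b x y.
apply: (ge0_from (hP a b x y)); rewrite /bobPi /= ptr_formula; apply: tr_psd_mul; last exact: Rv_psd.
by have [h0 [h1 _]] := hM x; case: a.
Qed.

Lemma sum_colrow (F : 'M[C]_2) :
  \sum_k col k F *m adjmx (col k F) = F *m adjmx F.
Proof.
apply/matrixP => i j; rewrite summxE !mxE; apply: eq_bigr => k _.
by rewrite !mxE big_ord1 !mxE.
Qed.

Lemma unit_rows (F : 'M[C]_2) : unitary2 F -> F *m adjmx F = 1%:M.
Proof. by move=> h; apply: mulmx1C. Qed.

Lemma unit_inner (F : 'M[C]_2) : unitary2 F ->
  forall i j, inner (col i F) (col j F) = (i == j)%:R.
Proof.
move=> hF i j; have := congr1 (fun A : 'M[C]_2 => A i j) (hF : adjmx F *m F = 1%:M); rewrite /= [in RHS]mxE => <-.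
by rewrite /inner !mxE; apply: eq_bigr => k _; rewrite !mxE.
Qed.

Lemma qf_sum_tr (F A : 'M[C]_2) : unitary2 F ->
  \sum_k qf A (col k F) (col k F) = \tr A.
Proof.
move=> hF; under eq_bigr => k _ do rewrite -trPi.
by rewrite -raddf_sum /= -mulmx_suml sum_colrow unit_rows // mul1mx.
Qed.

Lemma decomp (F : 'M[C]_2) (g : 'cV[C]_2) : unitary2 F ->
  g = \sum_k inner (col k F) g *: col k F.
Proof.
move=> hF; rewrite -{1}[g]mul1mx -(unit_rows hF) -sum_colrow mulmx_suml.
apply: eq_bigr => k _; rewrite -mulmxA [adjmx _ *m g]mx11_scalar mul_mx_scalar.
by [].
Qed.

Lemma sum2 (V : nmodType) (h : 'I_2 -> V) c c' : c != c' -> \sum_k h k = h c + h c'.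
Proof.
rewrite big_ord_recl big_ord1.
have e : lift ord0 ord0 = ord_max :> 'I_2 by apply: val_inj.
rewrite e; case: c => [[|[|//]] hc]; case: c' => [[|[|//]] hc'] //= _.
- by congr (h _ + h _); apply: val_inj.
- by rewrite addrC; congr (h _ + h _); apply: val_inj.
Qed.

Lemma qf_conj n (A : 'M[C]_n) u w : psd A -> qf A w u = (qf A u w)^*.
Proof.
move=> hA; rewrite /qf -adjmxE !adjmxM adjmxK psd_herm //.
by rewrite mulmxA.
Qed.

Lemma qf_zero n (A : 'M[C]_n) u : psd A -> qf A u u = 0 ->
  forall w, qf A u w = 0 /\ qf A w u = 0.
Proof.
move=> hA h0 w.
suff hs : qf A u w = 0 by split => //; rewrite qf_conj // hs rmorph0.
set s := qf A u w; set Q := qf A w w.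
have hsw : qf A w u = s^* by rewrite qf_conj.
have hQ : Q^* = Q by apply: geC0_conj; apply: hA.
set z := s * s^*.
have hz : z^* = z by apply: geC0_conj; apply: mul_conjC_ge0.
have [z0|zn0] := eqVneq z 0.
  by move/eqP: z0; rewrite /z mulf_eq0 conjC_eq0 orbb => /eqP.
set k := (Q + 1) / (2 * z).
have hk : k^* = k by rewrite /k rmorphM /= fmorphV /= rmorphM /= rmorphD /= hQ hz rmorph1 rmorph_nat.
have := hA (1 *: w + (- (k * s)) *: u); rewrite -/(qf _ _ _).
rewrite qfDl !qfDr h0 -/s -/Q hsw rmorph1 mul1r !mul1r rmorphN rmorphM /= hk.

have -> : Q + - (k * s) * s^* + - (k * s^*) * (s + - (k * s) * 0) = Q - k * z * 2.
  by rewrite /z; ring.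
have -> : k * z * 2 = Q + 1.
  by rewrite /k; field; rewrite zn0.
by rewrite opprD addrA subrr sub0r oppr_ge0 ler10.
Qed.

Lemma inner_conj n (v w : 'cV[C]_n) : inner w v = (inner v w)^*.
Proof. by rewrite /inner -adjmxE adjmxM adjmxK. Qed.

Lemma K_lem (F rho : 'M[C]_2) c c' : unitary2 F -> density rho -> c != c' ->
  qf rho (col c F) (col c F) = 0 ->
  forall g, qf rho g g = (inner (col c' F) g)^* * inner (col c' F) g.
Proof.
move=> hF [hr htr] hcc h0 g.
have eg := decomp g hF; rewrite (sum2 _ hcc) in eg.
set al := inner (col c F) g in eg; set be := inner (col c' F) g in eg *.
have [z1 z2] := qf_zero hr h0 (col c' F).
have ht := qf_sum_tr rho hF; rewrite (sum2 _ hcc) h0 add0r htr in ht.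
rewrite {1 2}eg qfDl !qfDr h0 z1 z2 ht.
by rewrite !mulr0 !add0r mulr1 mulr0 add0r.
Qed.

Lemma Kg_lem (F G rho : 'M[C]_2) c c' : MUB F G -> density rho -> c != c' ->
  qf rho (col c F) (col c F) = 0 ->
  forall j, qf rho (col j G) (col j G) = ((1 / 2)%:C)%C.
Proof.
move=> [hF [hG hM]] hr hcc h0 j.
rewrite (K_lem hF hr hcc h0) -(hM c' j) normCK mulrC.
by [].
Qed.

Lemma LHS_ge0 (F G : 'M[C]_2) P : unsteerable F G P -> forall a b x y, 0 <= P a b x y.
Proof.
move=> [n [pl [q [rl [hpl [_ [hq [_ [hrl hP]]]]]]]]] a b x y.
apply: (ge0_from (hP a b x y)); apply: sumr_ge0 => l _; apply: mulr_ge0.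
  by rewrite ler0c'; apply: mulr_ge0.
by rewrite /bobPi /= trPi; have [h _] := hrl l; apply: h.
Qed.

Lemma zero_from (r : R) (z : C) : (r%:C)%C = z -> r = 0 -> z = 0.
Proof. by move=> <- ->; apply/eqP; rewrite eq_complex /= eqxx. Qed.

Lemma realc_eq0 (r : R) : ((r%:C)%C == 0 :> C) = (r == 0).
Proof. by rewrite eq_complex /= eqxx andbT. Qed.

Lemma sum_from (r1 r2 s : R) (z1 z2 : C) : (r1%:C)%C = z1 -> (r2%:C)%C = z2 ->
  z1 + z2 = (s%:C)%C -> r1 + r2 = s.
Proof. by move=> <- <- h; apply: complexI; rewrite rmorphD. Qed.

Lemma half_comb (p a b : R) (t1 t2 : C) : t1 = ((1/2)%:C)%C -> t2 = ((1/2)%:C)%C ->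
  a + b = 1 -> ((p * a)%:C)%C * t1 + ((p * b)%:C)%C * t2 = ((p / 2)%:C)%C.
Proof.
move=> -> -> h; rewrite -!rmorphM -rmorphD; congr (_%:C)%C.
by rewrite -mulrDl -mulrDr h mulr1 mul1r.
Qed.

Lemma case0 (p a b : R) (t1 t2 : C) : p = 0 ->
  ((p * a)%:C)%C * t1 + ((p * b)%:C)%C * t2 = ((p / 2)%:C)%C.
Proof. by move=> ->; rewrite !mul0r addr0; apply/eqP; rewrite eq_complex /= eqxx. Qed.

Lemma prod_zero (r : R) (t : C) : ((r%:C)%C) * t = 0 -> r != 0 -> t = 0.
Proof.
move/eqP; rewrite mulf_eq0 => /orP[|/eqP //].
by rewrite realc_eq0 => ->.
Qed.

Lemma sum_half n (pl : 'I_n -> R) : \sum_l pl l = 1 ->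
  \sum_l ((pl l / 2)%:C)%C = ((1 / 2)%:C)%C :> C.
Proof. by move=> h; rewrite -rmorph_sum -mulr_suml h. Qed.

Lemma Lkey (F G : 'M[C]_2) P : MUB F G -> unsteerable F G P ->
  P false true false false = 0 -> P true false false false = 0 ->
  P false false true true + P true true true true = 1 / 2.
Proof.
move=> hMUB [n [pl [q [rl [hpl [hs [hq [hq1 [hrl hP]]]]]]]]] h1 h2.
have T0 : forall l b y, 0 <= \tr (bobPi F G b y *m rl l).
  by move=> l b y; rewrite /bobPi /= trPi; have [h _] := hrl l; apply: h.
have ge : forall l x a b y, 0 <= ((pl l * q l x a)%:C)%C * \tr (bobPi F G b y *m rl l).
  by move=> l x a b y; apply: mulr_ge0 => //; rewrite ler0c'; apply: mulr_ge0.
have Z1 := psumr_eq0P (fun l _ => ge l false false true false) (zero_from (hP _ _ _ _) h1).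
have Z2 := psumr_eq0P (fun l _ => ge l false true false false) (zero_from (hP _ _ _ _) h2).
apply: (sum_from (hP _ _ _ _) (hP _ _ _ _)); rewrite -big_split /= -(sum_half hs).
apply: eq_bigr => l _.
have [p0|pn0] := eqVneq (pl l) 0.
  exact: case0.
have hKG : forall bb, \tr (bobPi F G bb false *m rl l) = 0 ->
    forall b, \tr (bobPi F G b true *m rl l) = ((1/2)%:C)%C.
  move=> bb hz b; rewrite /bobPi /= trPi.
  have hcc : idx2 bb != idx2 (~~ bb) by clear hz; case: bb.
  apply: (Kg_lem hMUB (hrl l) hcc).
  by move: hz; rewrite /bobPi /= trPi.
have hq0 : q l false false != 0 \/ q l false true != 0.
  case: (eqVneq (q l false false) 0) => h; last by left.
  by right; move: (hq1 l false); rewrite h add0r => ->; apply: oner_neq0.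
case: hq0 => hq0.
  have hz := prod_zero (Z1 l isT) (mulf_neq0 pn0 hq0).
  by apply: half_comb; [apply: (hKG _ hz) | apply: (hKG _ hz) | apply: hq1].
have hz := prod_zero (Z2 l isT) (mulf_neq0 pn0 hq0).
by apply: half_comb; [apply: (hKG _ hz) | apply: (hKG _ hz) | apply: hq1].
Qed.

Definition tt2 n (v w : 'cV[C]_n) := inner v w * inner w v.

Lemma tr_rank1 n (v w : 'cV[C]_n) :
  \tr (v *m adjmx v *m (w *m adjmx w)) = tt2 v w.
Proof.
rewrite trPi /qf /tt2 /inner !mulmxA -[adjmx v *m w *m adjmx w *m v]mulmxA.
by rewrite [in LHS]mxE big_ord1.
Qed.

Lemma tr_rank1' n (v : 'cV[C]_n) : \tr (v *m adjmx v) = inner v v.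
Proof. by rewrite mxtrace_mulC trace_mx11. Qed.

Lemma psd_rank1 n (v : 'cV[C]_n) : psd (v *m adjmx v).
Proof.
move=> u; rewrite -/(qf _ _ _) /qf !mulmxA -[adjmx u *m v *m adjmx v *m u]mulmxA.
rewrite [in X in 0 <= X]mxE big_ord1 -/(inner u v) -/(inner v u) inner_conj.
by rewrite mulrC; apply: mul_conjC_ge0.
Qed.

Lemma psd_scale n (c : C) (A : 'M[C]_n) : 0 <= c -> psd A -> psd (c *: A).
Proof.
move=> hc hA u; rewrite -scalemxAr -scalemxAl mxE.
by apply: mulr_ge0 => //; apply: hA.
Qed.

Lemma tFF (F : 'M[C]_2) i j : unitary2 F ->
  tt2 (col i F) (col j F) = (((if i == j then 1 else 0) : R)%:C)%C.
Proof.
move=> hF; rewrite /tt2 !unit_inner // [j == i]eq_sym.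
by case: (i == j) => /=; rewrite ?mulr1 ?mulr0.
Qed.

Lemma tFG (F G : 'M[C]_2) i j : MUB F G ->
  tt2 (col i F) (col j G) = ((1 / 2 : R)%:C)%C.
Proof.
move=> [_ [_ hM]]; rewrite /tt2 -(hM i j) normCK -/(inner _ _).
by rewrite [inner (col j G) _]inner_conj.
Qed.

Lemma tGF (F G : 'M[C]_2) i j : MUB F G ->
  tt2 (col j G) (col i F) = ((1 / 2 : R)%:C)%C.
Proof. by move=> h; rewrite /tt2 mulrC -/(tt2 _ _) tFG. Qed.

Lemma lift00 : lift ord0 (ord0 : 'I_1) = ord_max :> 'I_2.
Proof. exact: val_inj. Qed.

Lemma ord2 (i : 'I_2) : i = ord0 \/ i = ord_max.
Proof. by case: i => [[|[|//]] h]; [left | right]; apply: val_inj. Qed.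

Lemma pair_sum (F : 'M[C]_2) : unitary2 F ->
  col (idx2 false) F *m adjmx (col (idx2 false) F) +
  col (idx2 true) F *m adjmx (col (idx2 true) F) = 1%:M.
Proof.
move=> hF; have h : idx2 false != idx2 true by [].
by rewrite -(sum2 (fun k => col k F *m adjmx (col k F)) h) sum_colrow unit_rows.
Qed.

End Aux.

Section B.
Variable R : realType.
Local Notation C := R[i].

Definition PS_bb : box R := fun a b x y =>
  if x == y then (if (a (+) b) == x then 1/2 else 0) else 1/4.
Definition PUS_col : box R := fun a b x y =>
  if x then 1/4 else if y then 1/4 else (if a == b then 1/2 else 0).
Definition qcol (l : 'I_2) (x a : bool) : R :=
  if x then 1/2 else (if idx2 a == l then 1 else 0).

Lemma col_eq (F G : 'M[C]_2) : MUB F G -> forall a b x y,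
  ((PUS_col a b x y)%:C)%C = \sum_(l < 2) ((1/2 * qcol l x a)%:C)%C *
     \tr (bobPi F G b y *m (col l F *m adjmx (col l F))).
Proof.
move=> hM a b x y; have [hF [hG _]] := hM.
rewrite big_ord_recl big_ord1 lift00.
rewrite /bobPi /= !tr_rank1.
case: y => /=; rewrite ?(@tGF R F G _ _ hM) ?(@tFF R F _ _ hF).

all: rewrite -!rmorphM -!rmorphD; congr (_%:C)%C.
all: rewrite /PUS_col /qcol; case: a; case: b; case: x => /=.
all: rewrite ?eqxx /=; lra.
Qed.

Definition e2 : 'cV[C]_(2 * 2) :=
  \col_p ((mxtens_unindex p).1 == (mxtens_unindex p).2)%:R.
Definition rho2 : 'M[C]_(2 * 2) := ((1/2)%:C)%C *: (e2 *m adjmx e2).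
Definition wv (F G : 'M[C]_2) (a x : bool) : 'cV[C]_2 :=
  col (idx2 (if x then ~~ a else a)) (if x then G else F).
Definition Mx (F G : 'M[C]_2) (a x : bool) : 'M[C]_2 :=
  map_mx Num.conj (wv F G a x) *m adjmx (map_mx Num.conj (wv F G a x)).

Lemma e2E k i : e2 (mxtens_index (k, i)) 0 = (k == i)%:R.
Proof. by rewrite mxE ?mxtens_indexK ?unidx1 ?unidx2. Qed.

Lemma rho2E k' i k j : rho2 (mxtens_index (k', i)) (mxtens_index (k, j)) =
  ((1/2)%:C)%C * ((k' == i)%:R * (k == j)%:R).
Proof. by rewrite mxE mxE big_ord1 adjmxE !e2E rmorph_nat. Qed.

Lemma half2 : ((1/2)%:C)%C * 2 = 1 :> C.
Proof. by apply/eqP; rewrite eq_complex /=; apply/andP; split; apply/eqP; field. Qed.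

Lemma rho2_density : density rho2.
Proof.
split; first by apply: psd_scale; [rewrite ler0c' mul1r invr_ge0 ler0n | apply: psd_rank1].
rewrite mxtraceZ tr_rank1' /inner mxE sum_tens.
rewrite !big_ord_recl !big_ord0 !lift00 -[RHS]half2; congr (_ * _).
by rewrite !adjmxE !e2E !conjC_nat /=; ring.
Qed.

Lemma Mx_conj (w : 'cV[C]_2) :
  map_mx Num.conj w *m adjmx (map_mx Num.conj w) = map_mx Num.conj (w *m adjmx w).
Proof.
apply/matrixP => i j; rewrite !mxE !big_ord1 !mxE.
by rewrite rmorphM.
Qed.

Lemma MxT (w : 'cV[C]_2) :
  (map_mx Num.conj w *m adjmx (map_mx Num.conj w))^T = w *m adjmx w.
Proof.
apply/matrixP => i j; rewrite !mxE !big_ord1 !mxE conjCK.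
by rewrite mulrC.
Qed.

Lemma Mx_povm (F G : 'M[C]_2) : MUB F G -> povm2 (Mx F G).
Proof.
move=> [hF [hG _]] x; split; first exact: psd_rank1.
split; first exact: psd_rank1.
rewrite /Mx !Mx_conj -map_mxD /wv.
case: x => /=; last by rewrite pair_sum // map_mx1.
by rewrite addrC pair_sum // map_mx1.
Qed.

Lemma ptr_rho2 (M : 'M[C]_2) :
  ptraceA (tensmx M (1%:M : 'M[C]_2) *m rho2) = ((1/2)%:C)%C *: M^T.
Proof.
apply/matrixP => i j; rewrite ptr_entry.
under eq_bigr => k _ do under eq_bigr => k' _ do rewrite rho2E.
rewrite !big_ord_recl !big_ord0 !lift00 !mxE.
by case: (ord2 i) => ->; case: (ord2 j) => ->; rewrite /=; ring.
Qed.


Lemma bb_eq (F G : 'M[C]_2) : MUB F G -> forall a b x y,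
  ((PS_bb a b x y)%:C)%C =
  \tr (bobPi F G b y *m ptraceA (tensmx (Mx F G a x) (1%:M : 'M[C]_2) *m rho2)).
Proof.
move=> hM a b x y; have [hF [hG _]] := hM.
rewrite ptr_rho2 /Mx MxT -scalemxAr mxtraceZ /bobPi /wv /= tr_rank1.
case: y; case: x => /=;
  rewrite ?(@tGF R F G _ _ hM) ?(@tFG R F G _ _ hM) ?(@tFF R F _ _ hF) ?(@tFF R G _ _ hG);
  rewrite -rmorphM; congr (_%:C)%C; rewrite /PS_bb; case: a; case: b => /=; rewrite ?eqxx /=; lra.
Qed.

Lemma bb_inN (F G : 'M[C]_2) : MUB F G -> in_N F G PS_bb.
Proof.
move=> hM; exists 2, rho2, (Mx F G); split; first exact: rho2_density.
by split; [exact: Mx_povm | exact: bb_eq].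
Qed.

Lemma col_unsteer (F G : 'M[C]_2) : MUB F G -> unsteerable F G PUS_col.
Proof.
move=> hM; have [hF [hG _]] := hM.
exists 2, (fun _ => 1/2), qcol, (fun l => col l F *m adjmx (col l F)).
split; first by move=> l; lra.
split; first by rewrite big_ord_recl big_ord1; lra.
split; first by move=> l x a; rewrite /qcol; case: x; [lra | case: eqP => _; lra].
split.
  move=> l x; rewrite /qcol; case: x; first lra.
  by case: (ord2 l) => ->; rewrite /= ?eqxx /=; lra.
split; first by move=> l; split; [exact: psd_rank1 | rewrite tr_rank1' unit_inner // eqxx].
exact: col_eq hM.
Qed.

Lemma bb_steer (F G : 'M[C]_2) : MUB F G -> steerable F G PS_bb.
Proof.
move=> hM hU; have := Lkey hM hU; rewrite /PS_bb /= => /(_ erefl erefl).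
lra.
Qed.

Lemma dec_eq (V : R) a b x y :
  P_col_BB84 V a b x y = V * PS_bb a b x y + (1 - V) * PUS_col a b x y.
Proof.
by case: a; case: b; case: x; case: y; rewrite /P_col_BB84 /PS_bb /PUS_col /sgnb /=; lra.
Qed.

End B.

Close Scope sesquilinear_scope.
Unset Implicit Arguments.
Set Strict Implicit.

Theorem corollary2 (R : realType) (F G : 'M[R[i]]_2) (V : R) :
  MUB F G -> 0 < V <= 1 ->
  steering_cost_eq F G (P_col_BB84 V) V.
Proof.
move=> hM /andP[V0 V1]; split.
  split; first by apply/andP; split; [apply: ltW|].
  exists (@PS_bb R), (@PUS_col R); split; first exact: bb_inN.
  split; first exact: bb_steer.
  split; first exact: col_unsteer.
  exact: dec_eq.
move=> pS [/andP[p0 p1] [PS [PUS [hN [_ [hU hE]]]]]].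
have [->|pn1] := eqVneq pS 1; first by [].
have g1 := inN_ge0 hN; have g2 := LHS_ge0 hU.
have q0 : 0 <= 1 - pS by rewrite subr_ge0.
have zz : forall a b, P_col_BB84 V a b false false = 0 -> PUS a b false false = 0.
  move=> a b h0; have := hE a b false false; rewrite h0 => e.
  have h1 := mulr_ge0 p0 (g1 a b false false).
  have h2 := mulr_ge0 q0 (g2 a b false false).
  have : (1 - pS) * PUS a b false false = 0 by lra.
  move/eqP; rewrite mulf_eq0 subr_eq0 eq_sym (negbTE pn1) /= => /eqP //.
have z1 : PUS false true false false = 0.
  by apply: zz; rewrite /P_col_BB84 /sgnb /=; lra.
have z2 : PUS true false false false = 0.
  by apply: zz; rewrite /P_col_BB84 /sgnb /=; lra.
have L := Lkey hM hU z1 z2.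
have e00 := hE false false true true; have e11 := hE true true true true.
rewrite /P_col_BB84 /sgnb /= in e00 e11.
have h := addr_ge0 (mulr_ge0 p0 (g1 false false true true)) (mulr_ge0 p0 (g1 true true true true)).
have hl : (1 - pS) * PUS false false true true + (1 - pS) * PUS true true true true = (1 - pS) / 2.
  by rewrite -mulrDr L; ring.
lra.
Qed.
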